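(* Let $S$ be a quaternionic structure of local type of order $n$. (i) If $n$ is even and $-1=1$, then $M(S)=E_n$, the $n\times n$ matrix with $1$ on the anti-diagonal (entries $(i,n-1-i)$) and $0$ elsewhere. (ii) If $n$ is even and $-1\ne1$, then $M(S)$ is the $n\times n$ matrix with $M_{0,n-1}=M_{n-1,0}=M_{n-1,n-1}=1$, $M_{i,n-1-i}=1$ for $1\le i\le n-2$, and all other entries $0$. (iii) If $n$ is odd, then $M(S)$ is the $n\times n$ matrix with $M_{0,0}=1$, $M_{i,n-i}=1$ for $1\le i\le n-1$, and all other entries $0$.
   Context: A quaternionic structure is a triple $S=(G,-1,q)$ where $G$ is a multiplicative group in which every element is its own inverse (an $\mathbb F_2$-vector space), $-1\in G$ is distinguished (possibly $-1=1$), $-a:=(-1)a$, and $q:G\times G\to Q$ is surjective onto a set $Q$ with distinguished $0$, satisfying for all $a,b,c,d$: (Q1) $q(a,-a)=0$; (Q2) $q(a,b)=q(b,a)$; (Q3) $q(a,b)=q(a,c)\iff q(a,bc)=0$; (Q4) $q(a,b)=q(c,d)\iff\exists x$: $q(a,b)=q(a,x)=q(c,x)=q(c,d)$. The order is $\dim_{\mathbb F_2}G$. $S$ is nondegenerate if $\{a:q(a,x)=0\ \forall x\}=\{1\}$, and of local type if finite, nondegenerate, of order at least $3$, with exactly two quaternions. $B(S)$ is the abelian group (operation $\ast$) generated by $Q$ subject only to $q(a,b)\ast q(a,c)=q(a,bc)$. On $\mathbb N_0$, $\ast$ is bitwise XOR. A basis of $S$ is an ordered $\mathbb F_2$-basis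 $\mathcal A=(a_0,\dots,a_{n-1})$ of $G$ with $a_0=-1$ whenever $-1\ne1$. For an ordered basis $\mathcal B=(q_0,\dots,q_{m-1})$ of $B(S)$, $\phi_{\mathcal B}:B(S)\to(\{0,\dots,2^m-1\},\ast)$ is the isomorphism $q_k\mapsto2^k$, and $M_{\mathcal A,\mathcal B}(S)=(\phi_{\mathcal B}(q(a_i,a_j)))_{0\le i,j\le n-1}$. Matrices in $\mathrm{Mat}_n(\mathbb N_0)$ are ordered lexicographically, comparing entries row by row with the usual order on $\mathbb N_0$. The normal quaternionic matrix $M(S)$ is the lexicographic minimum of $M_{\mathcal A,\mathcal B}(S)$ over all bases $\mathcal A$ of $S$ and all ordered bases $\mathcal B$ of $B(S)$. *)

(* Defs.v *)
From HB Require Import structures.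
From mathcomp Require Import all_boot all_order all_algebra.
Set Implicit Arguments. Unset Strict Implicit. Unset Printing Implicit Defensive.
Import Order.TTheory GRing.Theory Num.Theory.
Local Open Scope ring_scope.

(* The group G (every element its own inverse, i.e. an F_2-vector space) is
   written ADDITIVELY: the paper's product ab is a + b, the paper's 1 is 0,
   and the distinguished element "-1" is qm1; -a := qm1 + a. *)
Record qstruct := QStruct {
  QG : finZmodType;
  qm1 : QG;
  QQ : finType;
  qz : QQ;
  qf : QG -> QG -> QQ
}.

Definition is_qstruct (S : qstruct) : Prop :=
  ((forall x : QG S, x + x = 0) /\
   (forall z : QQ S, exists a b, qf a b = z)) /\
  [/\ (forall a : QG S, qf a (qm1 S + a) = qz S),
      (forall a b : QG S, qf a b = qf b a),
      (forall a b c : QG S, qf a b = qf a c <-> qf a (b + c) = qz S)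
    & (forall a b c d : QG S, qf a b = qf c d <->
         exists x, [/\ qf a b = qf a x, qf a x = qf c x & qf c x = qf c d])].

Definition G_basis (S : qstruct) (n : nat) (a : 'I_n -> QG S) : Prop :=
  (forall x : QG S, exists s : {set 'I_n}, x = \sum_(i in s) a i) /\
  (forall s t : {set 'I_n}, \sum_(i in s) a i = \sum_(i in t) a i -> s = t).

Definition qs_order (S : qstruct) (n : nat) : Prop :=
  exists a : 'I_n -> QG S, G_basis a.

Definition S_basis (S : qstruct) (n : nat) (a : 'I_n -> QG S) : Prop :=
  G_basis a /\ (qm1 S <> 0 -> forall i : 'I_n, val i = 0%N -> a i = qm1 S).

Definition nondegenerate (S : qstruct) : Prop :=
  forall a : QG S, (forall x, qf a x = qz S) -> a = 0.

(* local type (finiteness is built into qstruct) *)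
Definition local_type (S : qstruct) : Prop :=
  [/\ nondegenerate S, (exists n, qs_order S n /\ (3 <= n)%N) & #|QQ S| = 2%N].

(* B(S): the abelian group generated by Q subject to q(a,b)*q(a,c) = q(a,bc).
   Modelled literally as the free abelian group Z^Q (functions Q -> int)
   modulo the subgroup R generated by the relators
   e_{q(a,b)} + e_{q(a,c)} - e_{q(a,bc)}. *)
Definition unitv (S : qstruct) (z : QQ S) : QQ S -> int :=
  fun z' => ((z' == z) : nat)%:Z.

Definition relator (S : qstruct) (t : QG S * QG S * QG S) : QQ S -> int :=
  fun z => unitv (qf t.1.1 t.1.2) z + unitv (qf t.1.1 t.2) z
           - unitv (qf t.1.1 (t.1.2 + t.2)) z.

Definition Beq (S : qstruct) (v w : QQ S -> int) : Prop :=
  exists c : QG S * QG S * QG S -> int,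
    forall z, v z - w z = \sum_(t : QG S * QG S * QG S) c t * relator t z.

Definition Bsum (S : qstruct) (m : nat) (b : 'I_m -> QQ S -> int)
  (s : {set 'I_m}) : QQ S -> int := fun z => \sum_(k in s) b k z.

Definition B_basis (S : qstruct) (m : nat) (b : 'I_m -> QQ S -> int) : Prop :=
  (forall v : QQ S -> int, exists s : {set 'I_m}, Beq v (Bsum b s)) /\
  (forall s t : {set 'I_m}, Beq (Bsum b s) (Bsum b t) -> s = t).

(* X = M_{A,B}(S): X i j = phi_B(q(a_i,a_j)), where phi_B sends the element
   with (unique) coordinate set s in the basis B to \sum_{k in s} 2^k. *)
Definition is_MAB (S : qstruct) (n m : nat) (a : 'I_n -> QG S)
  (b : 'I_m -> QQ S -> int) (X : 'M[nat]_n) : Prop :=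
  forall i j : 'I_n, exists s : {set 'I_m},
    Beq (unitv (qf (a i) (a j))) (Bsum b s) /\
    X i j = (\sum_(k in s) 2 ^ (val k))%N.

Definition attained (S : qstruct) (n : nat) (X : 'M[nat]_n) : Prop :=
  exists (a : 'I_n -> QG S) (m : nat) (b : 'I_m -> QQ S -> int),
    [/\ S_basis a, B_basis b & is_MAB a b X].

Definition lex_lt (n : nat) (X Y : 'M[nat]_n) : Prop :=
  exists i j : 'I_n, (X i j < Y i j)%N /\
    forall i' j' : 'I_n, ((i' < i)%N \/ (i' = i /\ (j' < j)%N)) ->
      X i' j' = Y i' j'.

Definition normal_matrix (S : qstruct) (n : nat) (X : 'M[nat]_n) : Prop :=
  attained S X /\ forall Y, attained S Y -> X = Y \/ lex_lt X Y.

Definition Mat_i (n : nat) : 'M[nat]_n :=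
  \matrix_(i, j) nat_of_bool ((i : nat) + j == n - 1)%N.

Definition Mat_ii (n : nat) : 'M[nat]_n :=
  \matrix_(i, j) nat_of_bool
    [|| ((i : nat) == 0) && ((j : nat) == n - 1),
        ((i : nat) == n - 1) && ((j : nat) == 0),
        ((i : nat) == n - 1) && ((j : nat) == n - 1)
      | (1 <= i <= n - 2) && ((j : nat) == n - 1 - i)]%N.

Definition Mat_iii (n : nat) : 'M[nat]_n :=
  \matrix_(i, j) nat_of_bool
    [|| ((i : nat) == 0) && ((j : nat) == 0)
      | (1 <= i <= n - 1) && ((j : nat) == n - i)]%N.

(* Main.v *)
Require Import Defs.
From mathcomp Require Import all_boot all_order all_algebra zify.
From Stdlib Require Import Classical.
Set Implicit Arguments. Unset Strict Implicit. Unset Printing Implicit Defensive.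
Import Order.TTheory GRing.Theory Num.Theory.

Lemma card_setT_pow (T : finType) : #|{set T}| = 2 ^ #|T|.
Proof.
have -> : #|T| = #|[set: T]| by rewrite cardsT.
rewrite -(card_powerset [set: T]) -cardsT; congr #|pred_of_set _|.
by apply/setP => A; rewrite !inE subsetT.
Qed.

Lemma two_elems (T : finType) (z0 : T) : #|T| = 2 -> exists e : T, e != z0 /\ forall z, z = z0 \/ z = e.
Proof.
move=> H2.
have : #|[set z | z != z0]| == 1.
  rewrite -cardsT (cardsD1 z0) inE in H2; case: H2 => <-.
  by apply/eqP; congr #|pred_of_set _|; apply/setP => z; rewrite !inE andbT.
move/cards1P => [e He].
have : e \in [set z | z != z0] by rewrite He set11.
rewrite inE => Hne; exists e; split => // z.
case: (eqVneq z z0) => [->|Hz]; first by left.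
by right; apply/set1P; rewrite -He inE.
Qed.

Lemma bigxor_eq (m : nat) (s : {set 'I_m}) (j : 'I_m) :
  \big[addb/false]_(i in s) (i == j) = (j \in s).
Proof.
case: (boolP (j \in s)) => Hj.
  rewrite (bigD1 j) //= eqxx big1 // => i /andP[_ /negPf ->] //.
rewrite big1 // => i Hi; apply/negP => /eqP Hij; by rewrite -Hij Hi in Hj.
Qed.

Section Basics.
Local Open Scope ring_scope.
Variable S : qstruct.
Local Notation G := (QG S).
Local Notation w := (qm1 S).
Hypothesis HS : is_qstruct S.
Hypothesis HQ2 : #|QQ S| = 2.
Hypothesis Hnd : Defs.nondegenerate S.

Definition bt (x y : G) : bool := qf x y != qz S.

Lemma addxx (x : G) : x + x = 0.
Proof. by case: HS => [[H _] _]; apply: H. Qed.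

Lemma addK2 (x y : G) : x + y = 0 -> x = y.
Proof. by move=> H; rewrite -[x]addr0 -(addxx y) addrA H add0r. Qed.

Lemma bt_sym x y : bt x y = bt y x.
Proof. by case: HS => _ [_ H _ _]; rewrite /bt H. Qed.

Lemma qf0 x : qf x 0 = qz S.
Proof. case: HS => _ [_ _ H _]. by rewrite -(addr0 0); apply/H. Qed.

Lemma bt0 x : bt x 0 = false.
Proof. by rewrite /bt qf0 eqxx. Qed.

Lemma bt0l x : bt 0 x = false.
Proof. by rewrite bt_sym bt0. Qed.

Lemma btD x y z : bt x (y + z) = bt x y (+) bt x z.
Proof.
case: HS => _ [_ _ H _].
have [e [He Hall]] := two_elems (qz S) HQ2.
have E1 : bt x (y + z) = ~~ (qf x y == qf x z).
  rewrite /bt; congr negb; apply/eqP/eqP; by move/H.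
rewrite E1 /bt.
case: (Hall (qf x y)) => ->; case: (Hall (qf x z)) => ->;
  rewrite ?eqxx ?He //= eq_sym (negPf He) //.
Qed.

Lemma btDl x y z : bt (x + y) z = bt x z (+) bt y z.
Proof. by rewrite bt_sym btD !(bt_sym z). Qed.

Lemma bt_diag x : bt x x = bt x w.
Proof.
case: HS => _ [H1 _ H _].
by rewrite /bt ((H x w x).2 (H1 x)).
Qed.

Lemma bt_sum (I : finType) (P : pred I) (f : I -> G) x :
  bt x (\sum_(i | P i) f i) = \big[addb/false]_(i | P i) bt x (f i).
Proof. exact: (big_morph (bt x) (btD x) (bt0 x)). Qed.

Lemma bt_suml (I : finType) (P : pred I) (f : I -> G) x :
  bt (\sum_(i | P i) f i) x = \big[addb/false]_(i | P i) bt (f i) x.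
Proof. rewrite bt_sym bt_sum; apply: eq_bigr => i _; exact: bt_sym. Qed.

Lemma bt_if (b : bool) x y : bt x (if b then y else 0) = b && bt x y.
Proof. by case: b; rewrite ?bt0. Qed.

Lemma bt_ifl (b : bool) x y : bt (if b then y else 0) x = b && bt y x.
Proof. by case: b; rewrite ?bt0l. Qed.

Lemma nondeg x : (forall y, bt x y = false) -> x = 0.
Proof.
move=> H; apply: Hnd => y; move: (H y); rewrite /bt; by move/negbFE/eqP.
Qed.


Lemma sum_inj_dual m (a d : 'I_m -> G) :
  (forall i j, bt (a i) (d j) = (i == j)) ->
  injective (fun s : {set 'I_m} => \sum_(i in s) a i).
Proof.
move=> Hd s t Hst; apply/setP => j.
have := congr1 (fun x => bt x (d j)) Hst; rewrite /= !bt_suml.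
under eq_bigr do rewrite Hd. under [X in _ = X -> _]eq_bigr do rewrite Hd.
by rewrite !bigxor_eq.
Qed.

Lemma cardG n (a : 'I_n -> G) : G_basis a -> #|G| = (2 ^ n)%N.
Proof.
move=> [Hsp Hinj].
have inj : injective (fun s : {set 'I_n} => \sum_(i in s) a i) by move=> s t /Hinj.
apply/eqP; rewrite eqn_leq; apply/andP; split.
  rewrite -(card_ord n) -card_setT_pow -(card_codom inj); apply: subset_leq_card.
  apply/subsetP => x _; have [s ->] := Hsp x; exact: codom_f.
by rewrite -{1}(card_ord n) -card_setT_pow; apply: leq_card inj.
Qed.

Lemma le_dual m (a d : 'I_m -> G) :
  (forall i j, bt (a i) (d j) = (i == j)) -> (2 ^ m <= #|G|)%N.
Proof.
move=> Hd; rewrite -{1}(card_ord m) -card_setT_pow; apply: leq_card (sum_inj_dual Hd).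
Qed.

Lemma basis_of_dual n (a d : 'I_n -> G) : #|G| = (2 ^ n)%N ->
  (forall i j, bt (a i) (d j) = (i == j)) -> G_basis a.
Proof.
move=> Hc Hd; have inj := sum_inj_dual Hd; split; last by move=> s t /inj.
move=> x; have : x \in codom (fun s : {set 'I_n} => \sum_(i in s) a i).
  by apply: (inj_card_onto inj); rewrite Hc card_setT_pow card_ord.
by case/codomP => s ->; exists s.
Qed.

Lemma sep_count m (e : nat -> G) :
  (forall x, (forall i, (i < m)%N -> bt x (e i) = false) -> x = 0) -> (#|G| <= 2 ^ m)%N.
Proof.
move=> H.
have inj : injective (fun x : G => [ffun i : 'I_m => bt x (e i)]).
  move=> x y Hxy; apply: addK2; apply: H => i Hi.
  have := congr1 (fun f : {ffun 'I_m -> bool} => f (Ordinal Hi)) Hxy; rewrite /= !ffunE => E.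
  by rewrite btDl E addbb.
by have := leq_card _ inj; rewrite card_ffun card_bool card_ord.
Qed.

Lemma basis_zero n (a : 'I_n -> G) x : G_basis a ->
  (forall l, bt x (a l) = false) -> x = 0.
Proof.
move=> [Hsp _] H; apply: nondeg => y; have [s ->] := Hsp y.
by rewrite bt_sum big1.
Qed.

Lemma kill n (a : 'I_n -> G) (s : {set 'I_n}) : G_basis a ->
  (forall l, bt (\sum_(k in s) a k) (a l) = false) -> s = set0.
Proof.
move=> Hb H; have H0 := basis_zero Hb H.
apply: Hb.2; by rewrite H0 big_set0.
Qed.


Lemma bigxor_pick k (b : nat -> bool) j : (j < k)%N ->
  \big[addb/false]_(i < k) (b i && (i == j :> nat)) = b j.
Proof.
move=> Hj; rewrite (bigD1 (Ordinal Hj)) //= eqxx andbT big1 ?addbF // => i Hi.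
apply/negP => /andP[_ /eqP E]; move: Hi.
by move/eqP; apply; apply: val_inj.
Qed.

Definition pairsOK (F : seq G) (u v : nat -> G) (k : nat) : Prop :=
  (forall i j, (i < k)%N -> (j < k)%N ->
     [/\ bt (u i) (u j) = false, bt (v i) (v j) = false & bt (u i) (v j) = (i == j)]) /\ (forall f i, f \in F -> (i < k)%N -> bt f (u i) = false /\ bt f (v i) = false).

Definition FOK (F : seq G) (pF : G -> G) : Prop :=
  [/\ (forall z f, f \in F -> bt (z + pF z) f = false),
      (forall x z, (forall f, f \in F -> bt x f = false) -> bt x (pF z) = false)
    & (forall x, (forall f, f \in F -> bt x f = false) -> bt x x = false)].

Variable n : nat.
Hypothesis HG : #|G| = (2 ^ n)%N.

Lemma step F pF u v k : FOK F pF -> pairsOK F u v k -> (size F + 2 * k < n)%N ->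
  exists u' v', pairsOK F u' v' k.+1.
Proof.
move=> [P1 P2 P3] [Huv HF] Hlt.
pose inW x := (forall f, f \in F -> bt x f = false) /\ (forall i, (i < k)%N -> bt x (u i) = false /\ bt x (v i) = false).
have [x [[Wx1 Wx2] x0]] : exists x, inW x /\ x <> 0.
  apply: NNPP => Hno.
  pose e i := if (i < size F)%N then nth 0 F i
     else if (i < size F + k)%N then u (i - size F)%N else v (i - size F - k)%N.
  have := @sep_count (size F + 2 * k) e.
  have H : forall x, (forall i, (i < size F + 2 * k)%N -> bt x (e i) = false) -> x = 0.
    move=> x He; apply: NNPP => Hx; apply: Hno; exists x; split => //; split.
      move=> f Hf; have Hi : (index f F < size F + 2 * k)%N.
        have : (index f F < size F)%N by rewrite index_mem.
        lia.
      have := He _ Hi; rewrite /e index_mem Hf nth_index //.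
    move=> i Hi; split.
      have Hi' : (size F + i < size F + 2 * k)%N by lia.
      have := He _ Hi'; rewrite /e; have -> : (size F + i < size F)%N = false by lia.
      have -> : (size F + i < size F + k)%N = true by lia.
      by have -> : (size F + i - size F = i)%N by lia.
    have Hi' : (size F + k + i < size F + 2 * k)%N by lia.
    have := He _ Hi'; rewrite /e; have -> : (size F + k + i < size F)%N = false by lia.
    have -> : (size F + k + i < size F + k)%N = false by lia.
    by have -> : (size F + k + i - size F - k = i)%N by lia.
  move=> /(_ H); rewrite HG leq_exp2l //; lia.
have [z Hz] : exists z, bt x z = true.
  apply: NNPP => Hno; apply: x0; apply: nondeg => y.
  by case E: (bt x y) => //; exfalso; apply: Hno; exists y.
pose cor := \sum_(i < k) ((if bt z (v i) then u i else 0) + (if bt z (u i) then v i else 0)).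
pose y := z + pF z + cor.
have uF : forall j, (j < k)%N -> forall f, f \in F -> bt (u j) f = false.
  by move=> j Hj f Hf; rewrite bt_sym; case: (HF f j Hf Hj).
have vF : forall j, (j < k)%N -> forall f, f \in F -> bt (v j) f = false.
  by move=> j Hj f Hf; rewrite bt_sym; case: (HF f j Hf Hj).
have Wy1 : forall f, f \in F -> bt y f = false.
  move=> f Hf; rewrite /y /cor btDl P1 // bt_suml big1 // => i _.
  by rewrite btDl !bt_ifl uF ?vF ?andbF.
have Wy2 : forall j, (j < k)%N -> bt y (u j) = false /\ bt y (v j) = false.
  move=> j Hj.
  have Pu : bt (pF z) (u j) = false by rewrite bt_sym P2 // => f; apply: uF.
  have Pv : bt (pF z) (v j) = false by rewrite bt_sym P2 // => f; apply: vF.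
  rewrite /y /cor !btDl Pu Pv !addbF !bt_suml.
  split.
    rewrite (eq_bigr (fun i : 'I_k => bt z (u i) && (i == j :> nat))).
      by rewrite (bigxor_pick (fun i => bt z (u i)) Hj) addbb.
    move=> i _; rewrite btDl !bt_ifl (bt_sym (v i) (u j)).
    case: (Huv i j (ltn_ord i) Hj) => -> _ _; case: (Huv j i Hj (ltn_ord i)) => _ _ ->.
    by rewrite andbF eq_sym.
  rewrite (eq_bigr (fun i : 'I_k => bt z (v i) && (i == j :> nat))).
    by rewrite (bigxor_pick (fun i => bt z (v i)) Hj) addbb.
  move=> i _; rewrite btDl !bt_ifl.
  by case: (Huv i j (ltn_ord i) Hj) => _ -> ->; rewrite andbF addbF.
have Hxy : bt x y = true.
  rewrite /y /cor !btD P2 // bt_sum big1 ?Hz // => i _.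
  by rewrite btD !bt_if; case: (Wx2 i (ltn_ord i)) => -> ->; rewrite !andbF.
exists (fun i => if i == k then x else u i), (fun i => if i == k then y else v i).
split.
  move=> i j; rewrite !ltnS => Hi0 Hj0; move: Hi0 Hj0; rewrite (leq_eqVlt i) (leq_eqVlt j) => /orP[/eqP->|Hi] /orP[/eqP->|Hj];
    rewrite ?eqxx ?(ltn_eqF Hi) ?(ltn_eqF Hj).
  - by rewrite P3 // P3 // Hxy.
  - by case: (Wx2 j Hj) => -> ->; case: (Wy2 j Hj) => _ ->; rewrite eq_sym ltn_eqF.
  - rewrite (bt_sym _ x) (bt_sym _ y) (bt_sym _ y).
    by case: (Wx2 i Hi) => -> _; case: (Wy2 i Hi) => -> ->.
  - exact: Huv.
move=> f i Hf; rewrite ltnS leq_eqVlt => /orP[/eqP->|Hi].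
  by rewrite eqxx (bt_sym f) (bt_sym f y) Wx1 ?Wy1.
by rewrite ltn_eqF //; apply: HF.
Qed.

Lemma build F pF : FOK F pF -> forall k, (size F + 2 * k <= n.+1)%N ->
  exists u v, pairsOK F u v k.
Proof.
move=> HF; elim=> [|k IH] Hk.
  by exists (fun _ => 0), (fun _ => 0); split => // i j.
have [u [v Huv]] := IH ltac:(lia).
apply: step Huv _; first exact: HF. lia.
Qed.


Lemma beqP (b1 b2 : bool) : (b1 <-> b2) -> b1 = b2.
Proof. by case: b1; case: b2 => // [[H1 H2]]; [move: (H1 isT) | move: (H2 isT)]. Qed.

Definition Ti (m i j : nat) : bool := (i + j == m - 1)%N.
Definition Tii (m i j : nat) : bool :=
  [|| (i == 0) && (j == m - 1), (i == m - 1) && (j == 0),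
      (i == m - 1) && (j == m - 1) | (1 <= i <= m - 2) && (j == m - 1 - i)]%N.
Definition Tiii (m i j : nat) : bool :=
  [|| (i == 0) && (j == 0) | (1 <= i <= m - 1) && (j == m - i)]%N.

Lemma arr_i u v k : pairsOK [::] u v k ->
  exists a : 'I_(2 * k) -> G, forall i j : 'I_(2 * k), bt (a i) (a j) = Ti (2 * k) i j.
Proof.
move=> [Huv _].
exists (fun i : 'I_(2 * k) => if (i < k)%N then u i else v (2 * k - 1 - i)%N).
move=> i j; have Hi' := ltn_ord i; have Hj' := ltn_ord j; rewrite /Ti.
case: (ltnP i k) => Hi; case: (ltnP j k) => Hj.
- by case: (Huv i j Hi Hj) => -> _ _; apply: beqP; lia.
- have H : (2 * k - 1 - j < k)%N by lia.
  by case: (Huv i _ Hi H) => _ _ ->; apply: beqP; lia.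
- have H : (2 * k - 1 - i < k)%N by lia.
  by rewrite bt_sym; case: (Huv j _ Hj H) => _ _ ->; apply: beqP; lia.
- have H1 : (2 * k - 1 - i < k)%N by lia.
  have H2 : (2 * k - 1 - j < k)%N by lia.
  by case: (Huv _ _ H1 H2) => _ -> _; apply: beqP; lia.
Qed.

Lemma arr_iii u v k : pairsOK [:: w] u v k -> bt w w = true ->
  exists a : 'I_(2 * k).+1 -> G, a ord0 = w /\
    forall i j : 'I_(2 * k).+1, bt (a i) (a j) = Tiii (2 * k).+1 i j.
Proof.
move=> [Huv HF] Hww.
have Hw : forall i, (i < k)%N -> bt w (u i) = false /\ bt w (v i) = false.
  by move=> i Hi; apply: HF; rewrite ?mem_head.
exists (fun i : 'I_(2 * k).+1 => if (i : nat) == 0%N then w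
   else if (i <= k)%N then u (i.-1) else v (2 * k - i)%N); split => //.
move=> i j; have Hi' := ltn_ord i; have Hj' := ltn_ord j; rewrite /Tiii.
case: (eqVneq (i : nat) 0%N) => Hi0; case: (eqVneq (j : nat) 0%N) => Hj0.
- by rewrite Hww; apply: beqP; lia.
- case: (leqP j k) => Hj.
    have H : (j.-1 < k)%N by lia.
    by case: (Hw _ H) => -> _; apply: beqP; lia.
  have H : (2 * k - j < k)%N by lia.
  by case: (Hw _ H) => _ ->; apply: beqP; lia.
- rewrite bt_sym; case: (leqP i k) => Hi.
    have H : (i.-1 < k)%N by lia.
    by case: (Hw _ H) => -> _; apply: beqP; lia.
  have H : (2 * k - i < k)%N by lia.
  by case: (Hw _ H) => _ ->; apply: beqP; lia.
case: (leqP i k) => Hi; case: (leqP j k) => Hj.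
- have H1 : (i.-1 < k)%N by lia.
  have H2 : (j.-1 < k)%N by lia.
  by case: (Huv _ _ H1 H2) => -> _ _; apply: beqP; lia.
- have H1 : (i.-1 < k)%N by lia.
  have H2 : (2 * k - j < k)%N by lia.
  by case: (Huv _ _ H1 H2) => _ _ ->; apply: beqP; lia.
- have H1 : (2 * k - i < k)%N by lia.
  have H2 : (j.-1 < k)%N by lia.
  by rewrite bt_sym; case: (Huv _ _ H2 H1) => _ _ ->; apply: beqP; lia.
- have H1 : (2 * k - i < k)%N by lia.
  have H2 : (2 * k - j < k)%N by lia.
  by case: (Huv _ _ H1 H2) => _ -> _; apply: beqP; lia.
Qed.

Lemma arr_ii u v k z : pairsOK [:: w; z] u v k -> bt w w = false -> bt w z = true ->
  exists a : 'I_(2 * k).+2 -> G, a ord0 = w /\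
    forall i j : 'I_(2 * k).+2, bt (a i) (a j) = Tii (2 * k).+2 i j.
Proof.
move=> [Huv HF] Hww Hwz.
have Hzz : bt z z = true by rewrite bt_diag bt_sym.
have Hw : forall i, (i < k)%N -> bt w (u i) = false /\ bt w (v i) = false.
  by move=> i Hi; apply: HF; rewrite ?mem_head.
have Hz : forall i, (i < k)%N -> bt z (u i) = false /\ bt z (v i) = false.
  by move=> i Hi; apply: HF; rewrite // !inE eqxx orbT.
exists (fun i : 'I_(2 * k).+2 => if (i : nat) == 0%N then w
   else if (i : nat) == (2 * k).+1 then z
   else if (i <= k)%N then u (i.-1) else v (2 * k - i)%N); split => //.
move=> i j; have Hi' := ltn_ord i; have Hj' := ltn_ord j; rewrite /Tii.
case: (eqVneq (i : nat) 0%N) => Hi0; [|case: (eqVneq (i : nat) (2 * k).+1) => Hi1];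
case: (eqVneq (j : nat) 0%N) => Hj0; try (case: (eqVneq (j : nat) (2 * k).+1) => Hj1).
all: try (rewrite ?Hww ?Hwz ?Hzz ?(bt_sym z w) ?Hwz; by apply: beqP; lia).
- case: (leqP j k) => Hj.
    have H : (j.-1 < k)%N by lia.
    by case: (Hw _ H) => -> _; apply: beqP; lia.
  have H : (2 * k - j < k)%N by lia.
  by case: (Hw _ H) => _ ->; apply: beqP; lia.
- case: (leqP j k) => Hj.
    have H : (j.-1 < k)%N by lia.
    by case: (Hz _ H) => -> _; apply: beqP; lia.
  have H : (2 * k - j < k)%N by lia.
  by case: (Hz _ H) => _ ->; apply: beqP; lia.
- rewrite bt_sym; case: (leqP i k) => Hi.
    have H : (i.-1 < k)%N by lia.
    by case: (Hw _ H) => -> _; apply: beqP; lia.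
  have H : (2 * k - i < k)%N by lia.
  by case: (Hw _ H) => _ ->; apply: beqP; lia.
- rewrite bt_sym; case: (leqP i k) => Hi.
    have H : (i.-1 < k)%N by lia.
    by case: (Hz _ H) => -> _; apply: beqP; lia.
  have H : (2 * k - i < k)%N by lia.
  by case: (Hz _ H) => _ ->; apply: beqP; lia.
case: (leqP i k) => Hi; case: (leqP j k) => Hj.
- have H1 : (i.-1 < k)%N by lia.
  have H2 : (j.-1 < k)%N by lia.
  by case: (Huv _ _ H1 H2) => -> _ _; apply: beqP; lia.
- have H1 : (i.-1 < k)%N by lia.
  have H2 : (2 * k - j < k)%N by lia.
  by case: (Huv _ _ H1 H2) => _ _ ->; apply: beqP; lia.
- have H1 : (2 * k - i < k)%N by lia.
  have H2 : (j.-1 < k)%N by lia.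
  by rewrite bt_sym; case: (Huv _ _ H2 H1) => _ _ ->; apply: beqP; lia.
- have H1 : (2 * k - i < k)%N by lia.
  have H2 : (2 * k - j < k)%N by lia.
  by case: (Huv _ _ H1 H2) => _ -> _; apply: beqP; lia.
Qed.

Lemma dual_i m (a : 'I_m -> G) : (forall i j : 'I_m, bt (a i) (a j) = Ti m i j) ->
  exists d : 'I_m -> G, forall i j, bt (a i) (d j) = (i == j).
Proof.
move=> Hg; exists (fun j => a (rev_ord j)) => i j.
have Hi := ltn_ord i; have Hj := ltn_ord j.
rewrite Hg /Ti /=; apply: beqP; split.
  move/eqP => H; apply/eqP/val_inj => /=; lia.
by move/eqP => ->; apply/eqP; lia.
Qed.

Lemma dual_iii p (a : 'I_p.+1 -> G) : (forall i j : 'I_p.+1, bt (a i) (a j) = Tiii p.+1 i j) ->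
  exists d : 'I_p.+1 -> G, forall i j, bt (a i) (d j) = (i == j).
Proof.
move=> Hg; exists (fun j : 'I_p.+1 => a (inord (if (j : nat) == 0%N then 0 else p.+1 - j)%N)) => i j.
have Hi := ltn_ord i; have Hj := ltn_ord j.
rewrite Hg /Tiii inordK; last by case: ifP => /eqP H0; lia.
apply: beqP; split.
  move=> H; apply/eqP/val_inj => /=; move: H; case: ifP => /eqP H0 H; lia.
move/eqP => ->; case: ifP => /eqP H0; lia.
Qed.

Lemma dual_ii p (a : 'I_p.+2 -> G) : (forall i j : 'I_p.+2, bt (a i) (a j) = Tii p.+2 i j) ->
  exists d : 'I_p.+2 -> G, forall i j, bt (a i) (d j) = (i == j).
Proof.
move=> Hg; exists (fun j : 'I_p.+2 => if (j : nat) == 0%N then a ord_max + a ord0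
   else if (j : nat) == p.+1 then a ord0 else a (rev_ord j)) => i j.
have Hi := ltn_ord i; have Hj := ltn_ord j.
case: (eqVneq (j : nat) 0%N) => Hj0.
  rewrite btD !Hg /Tii /=.
  case: (eqVneq (i : nat) 0%N) => Hi0.
    have -> : i == j by apply/eqP/val_inj => /=; lia.
    by rewrite Hi0 /=; lia.
  have -> : i == j = false by apply/eqP => E; move: Hi0; rewrite E Hj0.
  case: (eqVneq (i : nat) p.+1) => Hi1.
    by rewrite Hi1 /=; lia.
  apply: beqP; split => //; lia.
case: (eqVneq (j : nat) p.+1) => Hj1.
  rewrite Hg /Tii /=; apply: beqP; split.
    move=> H; apply/eqP/val_inj => /=; lia.
  by move/eqP => ->; lia.
rewrite Hg /Tii /=; apply: beqP; split.
  move=> H; apply/eqP/val_inj => /=; lia.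
by move/eqP => ->; lia.
Qed.

Lemma FOK0 : w = 0 -> FOK [::] (fun _ => 0).
Proof.
move=> w0; split => //; first by move=> x z _; rewrite bt0.
by move=> x _; rewrite bt_diag w0 bt0.
Qed.

Lemma FOK1 : bt w w = true -> FOK [:: w] (fun z => if bt z w then w else 0).
Proof.
move=> Hww; split.
- move=> z f; rewrite inE => /eqP ->; rewrite btDl bt_ifl Hww andbT addbb //.
- by move=> x z Hx; rewrite bt_if Hx ?mem_head // andbF.
- by move=> x Hx; rewrite bt_diag Hx ?mem_head.
Qed.

Lemma FOK2 z0 : bt w w = false -> bt w z0 = true ->
  FOK [:: w; z0] (fun y => (if bt y z0 then w else 0) + (if bt y w then w + z0 else 0)).
Proof.
move=> Hww Hwz; have Hzz : bt z0 z0 = true by rewrite bt_diag bt_sym.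
have Hzw : bt z0 w = true by rewrite bt_sym.
split.
- move=> y f; rewrite !inE => /orP[] /eqP ->;
  rewrite !btDl !bt_ifl !btDl ?Hww ?Hwz ?Hzz ?Hzw; by case: (bt y z0); case: (bt y w).
- move=> x y Hx; have Hxw := Hx w (mem_head _ _).
  have Hxz : bt x z0 = false by apply: Hx; rewrite !inE eqxx orbT.
  by rewrite !btD !bt_if !btD Hxw Hxz !andbF.
- by move=> x Hx; rewrite bt_diag Hx ?mem_head.
Qed.

Lemma nondeg_ex x : x <> 0 -> exists y, bt x y = true.
Proof.
move=> x0; apply: NNPP => Hno; apply: x0; apply: nondeg => y.
by case E: (bt x y) => //; exfalso; apply: Hno; exists y.
Qed.

Lemma par_i : w = 0 -> ~~ odd n.
Proof.
move=> w0; apply/negP => Hodd.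
have [k Hk] : exists k, n.+1 = (2 * k)%N.
  by exists n./2.+1; have := odd_double_half n; rewrite Hodd -mul2n /=; lia.
have [u [v Huv]] := build (FOK0 w0) (k := k) ltac:(rewrite /=; lia).
have [a Ha] := arr_i Huv; have [d Hd] := dual_i Ha.
have := le_dual Hd; rewrite HG leq_exp2l //; lia.
Qed.

Lemma par_ii : bt w w = true -> odd n.
Proof.
move=> Hww; apply/negPn/negP => Hev.
have [k Hk] : exists k, n = (2 * k)%N.
  by exists n./2; have := odd_double_half n; rewrite (negPf Hev) -mul2n /=; lia.
have [u [v Huv]] := build (FOK1 Hww) (k := k) ltac:(rewrite /=; lia).
have [a [_ Ha]] := arr_iii Huv Hww; have [d Hd] := dual_iii Ha.
have := le_dual Hd; rewrite HG leq_exp2l //; lia.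
Qed.

Lemma par_iii : w <> 0 -> bt w w = false -> ~~ odd n.
Proof.
move=> w0 Hww; apply/negP => Hodd.
have [z0 Hwz] := nondeg_ex w0.
have [k Hk] : exists k, n = (2 * k).+1.
  by exists n./2; have := odd_double_half n; rewrite Hodd -mul2n /=; lia.
have [u [v Huv]] := build (FOK2 Hww Hwz) (k := k) ltac:(rewrite /=; lia).
have [a [_ Ha]] := arr_ii Huv Hww Hwz; have [d Hd] := dual_ii Ha.
have := le_dual Hd; rewrite HG leq_exp2l //; lia.
Qed.

Lemma ex_i : w = 0 -> ~~ odd n ->
  exists a : 'I_n -> G, G_basis a /\ forall i j, bt (a i) (a j) = Ti n i j.
Proof.
move=> w0 Hev.
have [k Hk] : exists k, n = (2 * k)%N.
  by exists n./2; have := odd_double_half n; rewrite (negPf Hev) -mul2n /=; lia.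
have [u [v Huv]] := build (FOK0 w0) (k := k) ltac:(rewrite /=; lia).
have [a Ha] := arr_i Huv; have [d Hd] := dual_i Ha.
have HG' : #|G| = (2 ^ (2 * k))%N by rewrite HG Hk.
rewrite Hk; exists a; split => //; exact: basis_of_dual HG' Hd.
Qed.

Lemma ex_ii : w <> 0 -> ~~ odd n -> (2 <= n)%N ->
  exists a : 'I_n -> G, (G_basis a /\ forall i : 'I_n, val i = 0%N -> a i = w) /\
     forall i j, bt (a i) (a j) = Tii n i j.
Proof.
move=> w0 Hev Hn2.
have Hww : bt w w = false.
  by case E: (bt w w) => //; have := par_ii E; rewrite (negPf Hev).
have [z0 Hwz] := nondeg_ex w0.
have [k Hk] : exists k, n = (2 * k).+2.
  by exists n./2.-1; have := odd_double_half n; rewrite (negPf Hev) -mul2n /=; lia.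
have [u [v Huv]] := build (FOK2 Hww Hwz) (k := k) ltac:(rewrite /=; lia).
have [a [Ha0 Ha]] := arr_ii Huv Hww Hwz; have [d Hd] := dual_ii Ha.
have HG' : #|G| = (2 ^ (2 * k).+2)%N by rewrite HG Hk.
rewrite Hk; exists a; split => //; split; first exact: basis_of_dual HG' Hd.
by move=> i Hi; rewrite -Ha0; congr a; apply: val_inj.
Qed.

Lemma ex_iii : odd n ->
  exists a : 'I_n -> G, (G_basis a /\ forall i : 'I_n, val i = 0%N -> a i = w) /\
     forall i j, bt (a i) (a j) = Tiii n i j.
Proof.
move=> Hodd.
have w0 : w <> 0 by move/par_i; rewrite Hodd.
have Hww : bt w w = true.
  by case E: (bt w w) => //; have := par_iii w0 E; rewrite Hodd.
have [k Hk] : exists k, n = (2 * k).+1.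
  by exists n./2; have := odd_double_half n; rewrite Hodd -mul2n /=; lia.
have [u [v Huv]] := build (FOK1 Hww) (k := k) ltac:(rewrite /=; lia).
have [a [Ha0 Ha]] := arr_iii Huv Hww; have [d Hd] := dual_iii Ha.
have HG' : #|G| = (2 ^ (2 * k).+1)%N by rewrite HG Hk.
rewrite Hk; exists a; split => //; split; first exact: basis_of_dual HG' Hd.
by move=> i Hi; rewrite -Ha0; congr a; apply: val_inj.
Qed.

Lemma kill_T (a : 'I_n -> G) (Hb : G_basis a) (i : 'I_n) (tau : 'I_n -> 'I_n) :
  (forall k l : 'I_n, (k < i)%N -> bt (a k) (a l) = (l == tau k)) ->
  (forall k1 k2 : 'I_n, (k1 < i)%N -> (k2 < i)%N -> tau k1 = tau k2 -> k1 = k2) ->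
  (forall l : 'I_n, (forall k : 'I_n, (k < i)%N -> l != tau k) -> bt (a i) (a l) = false) ->
  False.
Proof.
move=> H1 Hinj H2.
pose c k := bt (a i) (a (tau k)).
pose s := i |: [set k : 'I_n | (k < i)%N && c k].
have Hi : i \notin [set k : 'I_n | (k < i)%N && c k] by rewrite inE ltnn.
have Hs : s != set0 by apply/set0Pn; exists i; rewrite setU11.
apply: (negP Hs); apply/eqP; apply: (kill Hb) => l.
rewrite /s big_setU1 //= btDl bt_suml.
rewrite (eq_bigl (fun k : 'I_n => (k < i)%N && c k)); last by move=> k; rewrite inE.
rewrite (eq_bigr (fun k : 'I_n => l == tau k)); last by move=> k /andP[Hk _]; apply: H1.
have Hnot : forall k : 'I_n, (k < i)%N -> l = tau k -> \big[addb/false]_(k1 : 'I_n | (k1 < i)%N && c k1) (l == tau k1) = c k.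
  move=> k0 Hk0 El; case: (boolP (c k0)) => Hc.
    rewrite (bigD1 k0) /=; last by rewrite Hk0 Hc.
    rewrite El eqxx big1 // => k /andP[/andP[Hk _] Hne]; apply/negbTE.
    apply: contra Hne => /eqP E'; apply/eqP; apply: Hinj => //.
  rewrite big1 // => k /andP[Hk Hck]; apply/negbTE/negP => /eqP E'.
  have Ekk : k = k0 by apply: Hinj => //; rewrite -E' El.
  by rewrite Ekk (negPf Hc) in Hck.
case: (boolP [exists k : 'I_n, (k < i)%N && (l == tau k)]).
  case/existsP => k0 /andP[Hk0 /eqP El].
  by rewrite (Hnot k0 Hk0 El) /c -El addbb.
move=> Hno; have Hno' : forall k : 'I_n, (k < i)%N -> l != tau k.
  move=> k Hk; apply/negP => El; apply: (negP Hno); apply/existsP; exists k.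
  by rewrite Hk El.
rewrite big1 ?addbF; first exact: H2.
by move=> k /andP[Hk _]; apply/negbTE; apply: Hno'.
Qed.

Lemma oddE2 m : odd m = odd (m %% 2).
Proof. by rewrite modn2; case: (odd m). Qed.

Lemma min_i (a : 'I_n -> G) : G_basis a -> ~~ odd n -> forall i j : 'I_n,
  (forall i' j' : 'I_n, ((i' < i)%N \/ (i' = i /\ (j' < j)%N)) -> bt (a i') (a j') = Ti n i' j') ->
  Ti n i j -> bt (a i) (a j).
Proof.
move=> Hb Hev i j He Ht; case E: (bt (a i) (a j)) => //; exfalso.
have Hi := ltn_ord i; have Hj := ltn_ord j.
have Hn2 : (n %% 2 = 0)%N by rewrite modn2 (negPf Hev).
move: Ht; rewrite /Ti => /eqP Ht.
case: (ltngtP j i) => Hji.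
- have := He j i (or_introl Hji); rewrite bt_sym E /Ti => /esym/negbT/eqP; lia.
- apply: (kill_T Hb (i := i) (tau := @rev_ord n)).
  + move=> k l Hk; rewrite (He k l (or_introl Hk)).
    have Hk' := ltn_ord k; have Hl' := ltn_ord l.
    rewrite /Ti; apply: beqP; split => [/eqP H|/eqP ->].
      by apply/eqP/val_inj => /=; lia.
    by rewrite /=; apply/eqP; lia.
  + move=> k1 k2 _ _ /(congr1 val) /= H; apply: val_inj => /=.
    have := ltn_ord k1; have := ltn_ord k2; lia.
  + move=> l Hl; have Hl' := ltn_ord l.
    case: (ltngtP l j) => Hlj.
    * rewrite (He i l (or_intror (conj erefl Hlj))).
      by rewrite /Ti; apply/negbTE/eqP; lia.
    * have Hk : (rev_ord l < i)%N by rewrite /=; lia.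
      by move: (Hl _ Hk); rewrite rev_ordK eqxx.
    * by have -> : l = j by apply: val_inj.
- move: Ht Hn2; rewrite Hji; lia.
Qed.

Lemma min_ii (a : 'I_n -> G) : G_basis a -> (3 <= n)%N -> ~~ odd n ->
  (forall i : 'I_n, val i = 0%N -> a i = w) -> forall i j : 'I_n,
  (forall i' j' : 'I_n, ((i' < i)%N \/ (i' = i /\ (j' < j)%N)) -> bt (a i') (a j') = Tii n i' j') ->
  Tii n i j -> bt (a i) (a j).
Proof.
move=> Hb Hn3 Hev Ha0 i j He Ht; case E: (bt (a i) (a j)) => //; exfalso.
have Hi := ltn_ord i; have Hj := ltn_ord j.
have Hn2 : (n %% 2 = 0)%N by rewrite modn2 (negPf Hev).
move: Ht; rewrite /Tii => Ht.
case: (ltngtP j i) => Hji.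
- have := He j i (or_introl Hji); rewrite bt_sym E /Tii => /esym Hf.
  move: Ht Hf; case: (i : nat) => [|ii] /=; case: (j : nat) => [|jj] /=; lia.
- apply: (kill_T Hb (i := i) (tau := @rev_ord n)).
  + move=> k l Hk; rewrite (He k l (or_introl Hk)).
    have Hk' := ltn_ord k; have Hl' := ltn_ord l.
    rewrite /Tii; apply: beqP; split => [H|/eqP ->].
      by apply/eqP/val_inj => /=; lia.
    by rewrite /=; lia.
  + move=> k1 k2 _ _ /(congr1 val) /= H; apply: val_inj => /=.
    have := ltn_ord k1; have := ltn_ord k2; lia.
  + move=> l Hl; have Hl' := ltn_ord l.
    case: (ltngtP l j) => Hlj.
    * rewrite (He i l (or_intror (conj erefl Hlj))).
      by rewrite /Tii; apply/negbTE; lia.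
    * have Hk : (rev_ord l < i)%N by rewrite /=; lia.
      by move: (Hl _ Hk); rewrite rev_ordK eqxx.
    * by have -> : l = j by apply: val_inj.
-
  have Hin : (i : nat) = n.-1 by lia.
  have H0 : (0 < n)%N by lia.
  pose o : 'I_n := Ordinal H0.
  have Hao : a o = w by apply: Ha0.
  have Eij : j = i by apply: val_inj.
  have Hoi : (o < i)%N by rewrite /=; lia.
  move: E; rewrite Eij bt_diag -Hao bt_sym (He o i (or_introl Hoi)).
  by rewrite /Tii /= Hin; lia.
Qed.

Lemma ww_iii : odd n -> w <> 0 /\ bt w w = true.
Proof.
move=> Hodd; have w0 : w <> 0 by move/par_i; rewrite Hodd.
split => //; case E: (bt w w) => //; have := par_iii w0 E; by rewrite Hodd.
Qed.

Lemma min_iii (a : 'I_n -> G) : G_basis a -> odd n ->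
  (forall i : 'I_n, val i = 0%N -> a i = w) -> forall i j : 'I_n,
  (forall i' j' : 'I_n, ((i' < i)%N \/ (i' = i /\ (j' < j)%N)) -> bt (a i') (a j') = Tiii n i' j') ->
  Tiii n i j -> bt (a i) (a j).
Proof.
move=> Hb Hodd Ha0 i j He Ht; case E: (bt (a i) (a j)) => //; exfalso.
have Hi := ltn_ord i; have Hj := ltn_ord j.
have Hn2 : (n %% 2 = 1)%N by rewrite modn2 Hodd.
move: Ht; rewrite /Tiii => Ht.
case: (ltngtP j i) => Hji.
- have := He j i (or_introl Hji); rewrite bt_sym E /Tiii => /esym Hf.
  move: Ht Hf; case: (i : nat) => [|ii] /=; case: (j : nat) => [|jj] /=; lia.
- pose tau (k : 'I_n) : 'I_n := insubd k (if (k : nat) == 0%N then 0 else n - k)%N.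
  have Htau : forall k : 'I_n, (tau k : nat) = (if (k : nat) == 0%N then 0 else n - k)%N.
    move=> k; rewrite /tau insubdK // -topredE /=; have := ltn_ord k; case: ifP => /eqP; lia.
  apply: (kill_T Hb (i := i) (tau := tau)).
  + move=> k l Hk; rewrite (He k l (or_introl Hk)).
    have Hk' := ltn_ord k; have Hl' := ltn_ord l.
    rewrite /Tiii; apply: beqP; split => [H|/eqP ->].
      apply/eqP/val_inj; rewrite /= Htau; case: ifP => /eqP; lia.
    rewrite Htau; case: ifP => /eqP; lia.
  + move=> k1 k2 _ _ /(congr1 val) /=; rewrite !Htau => H; apply: val_inj => /=.
    move: H; have := ltn_ord k1; have := ltn_ord k2.
    case: ifP => /eqP; case: ifP => /eqP; lia.
  + move=> l Hl; have Hl' := ltn_ord l.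
    case: (ltngtP l j) => Hlj.
    * rewrite (He i l (or_intror (conj erefl Hlj))).
      by rewrite /Tiii; apply/negbTE; lia.
    * have H0 : (0 < n)%N by lia.
      have Hk : (n - l < n)%N by lia.
      have Hk2 : (Ordinal Hk < i)%N by rewrite /=; lia.
      suff El : l = tau (Ordinal Hk) by move: (Hl _ Hk2); rewrite -El eqxx.
      apply: val_inj; rewrite /= Htau /=; case: ifP => /eqP; lia.
    * by have -> : l = j by apply: val_inj.
-
  have Hi0 : (i : nat) = 0%N by lia.
  have Eij : j = i by apply: val_inj.
  move: E; rewrite Eij !Ha0 //; by case: (ww_iii Hodd) => _ ->.
Qed.

Lemma lex_first m (T Y : 'I_m -> 'I_m -> bool) :
  (forall i j : 'I_m, (forall i' j' : 'I_m, ((i' < i)%N \/ (i' = i /\ (j' < j)%N)) ->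
      Y i' j' = T i' j') -> T i j -> Y i j) ->
  (\matrix_(i < m, j < m) nat_of_bool (T i j)) = (\matrix_(i < m, j < m) nat_of_bool (Y i j)) \/
  lex_lt (\matrix_(i < m, j < m) nat_of_bool (T i j)) (\matrix_(i < m, j < m) nat_of_bool (Y i j)).
Proof.
move=> H.
case: (boolP [exists p : 'I_m * 'I_m, Y p.1 p.2 != T p.1 p.2]).
  case/existsP => p0 Hp0.
  case: (@arg_minnP _ p0 (fun p : 'I_m * 'I_m => Y p.1 p.2 != T p.1 p.2) (fun p : 'I_m * 'I_m => (p.1 * m + p.2)%N) Hp0) => [[i j]] /= Hne Hmin.
  have Hearly : forall i' j' : 'I_m, ((i' < i)%N \/ (i' = i /\ (j' < j)%N)) -> Y i' j' = T i' j'.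
    move=> i' j' Hij; apply/eqP; apply: contraT => Hn.
    have := Hmin (i', j') Hn; rewrite /=.
    have := ltn_ord j'; have := ltn_ord j; case: Hij => [Hi|[-> Hj]]; last by lia.
    move=> Hjm Hj'm; have : (i' * m + j' < i * m)%N; last by lia.
    have : (i'.+1 * m <= i * m)%N by rewrite leq_mul2r Hi orbT.
    rewrite mulSn; lia.
  right; exists i, j; split.
    rewrite !mxE; case E: (T i j).
      by move: Hne; rewrite (H i j Hearly E) E.
    by move: Hne; rewrite E; case: (Y i j).
  by move=> i' j' Hij; rewrite !mxE (Hearly i' j' Hij).
move=> Hno; left; apply/matrixP => i j; rewrite !mxE; congr nat_of_bool.
apply/eqP; apply: contraNT Hno => Hn; apply/existsP; exists (i, j); by rewrite /= eq_sym.
Qed.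

Variable e : QQ S.
Hypothesis He : e != qz S.
Hypothesis Hall : forall z, z = qz S \/ z = e.

Lemma eqe q : (e == q) = (q != qz S).
Proof. by case: (Hall q) => ->; rewrite ?eqxx ?(negPf He) // eq_sym. Qed.

Lemma unitv_e x y : unitv (qf x y) e = (bt x y : nat)%:Z.
Proof. by rewrite /unitv eqe. Qed.

Lemma unitv_qz q : unitv q (qz S) = ((q == qz S) : nat)%:Z.
Proof. by rewrite /unitv eq_sym. Qed.

Lemma Beq_par (v w : QQ S -> int) : Beq v w -> ((v e - w e) %% 2)%Z = 0.
Proof.
move=> [c ->]; apply/dvdz_mod0P; apply: rpred_sum => t _; apply: dvdz_mull.
rewrite /relator !unitv_e btD.
by case: (bt t.1.1 t.1.2); case: (bt t.1.1 t.2).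
Qed.

Lemma sum_if (T : finType) (t1 : T) (A : int) (f : T -> int) :
  \sum_t (if t == t1 then A else 0) * f t = A * f t1.
Proof.
rewrite (bigD1 t1) //= eqxx big1 ?addr0 // => t /negPf ->; by rewrite mul0r.
Qed.

Lemma par_Beq (v w : QQ S -> int) : ((v e - w e) %% 2)%Z = 0 -> Beq v w.
Proof.
move=> /dvdz_mod0P /dvdzP [q Hq].
case: HS => [[_ Hsurj] _]; have [a0 [b0 Hab]] := Hsurj e.
pose t1 : G * G * G := (0, 0, 0).
pose t2 : G * G * G := (a0, b0, b0).
exists (fun t => (if t == t1 then v (qz S) - w (qz S) + q else 0) + (if t == t2 then q else 0)) => z.
rewrite (eq_bigr (fun t => (if t == t1 then v (qz S) - w (qz S) + q else 0) * relator t z +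
   (if t == t2 then q else 0) * relator t z)); last by move=> t _; rewrite mulrDl.
rewrite big_split /= !sum_if /relator /= addr0 addxx !qf0 Hab.
have Hez : (qz S == e) = false by rewrite eq_sym (negPf He).
have Hez' : (e == qz S) = false by rewrite (negPf He).
case: (Hall z) => ->; rewrite /unitv ?eqxx ?Hez ?Hez' /=; lia.
Qed.

Lemma set_I1 (s : {set 'I_1}) : s = set0 \/ s = [set ord0].
Proof.
case: (boolP (ord0 \in s)) => H; [right|left]; apply/setP => k; rewrite (ord1 k) !inE ?eqxx //.
by apply/negbTE.
Qed.

Lemma BsumE m (b : 'I_m -> QQ S -> int) s z : Bsum b s z = \sum_(k in s) b k z.
Proof. by []. Qed.

Lemma B_basis_1 m (b : 'I_m -> QQ S -> int) : B_basis b ->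
  m = 1%N /\ forall k, ((b k e) %% 2)%Z = 1.
Proof.
move=> [Hsur Huniq].
have Hodd : forall k, ((b k e) %% 2)%Z = 1.
  move=> k; case E : ((b k e %% 2)%Z == 1); first by apply/eqP.
  have E0 : ((b k e - 0) %% 2)%Z = 0 by move/negbT/eqP: E; rewrite subr0; lia.
  have := Huniq [set k] set0; rewrite !/Bsum.
  have HB : Beq (Bsum b [set k]) (Bsum b set0).
    by apply: par_Beq; rewrite !BsumE big_set1 big_set0.
  move=> /(_ HB) /setP /(_ k); by rewrite !inE eqxx.
split=> //.
case: m b Hsur Huniq Hodd => [|[|m]] b Hsur Huniq Hodd //.
  have [s Hs] := Hsur (unitv e); move/Beq_par: Hs; rewrite BsumE big1; last by case.
  by rewrite /unitv eqxx.
pose k0 : 'I_m.+2 := ord0. pose k1 : 'I_m.+2 := Ordinal (isT : (1 < m.+2)%N).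
have Hk : k0 \notin [set k1] by rewrite inE.
have HB : Beq (Bsum b (k0 |: [set k1])) (Bsum b set0).
  apply: par_Beq; rewrite !BsumE big_setU1 //= big_set1 big_set0.
  have := Hodd k0; have := Hodd k1; lia.
move: (Huniq _ _ HB) => /setP /(_ k0); by rewrite !inE eqxx.
Qed.

Lemma MAB_val nn (a : 'I_nn -> G) m (b : 'I_m -> QQ S -> int) X :
  B_basis b -> is_MAB a b X -> forall i j, X i j = nat_of_bool (bt (a i) (a j)).
Proof.
move=> Hb HM; have [Em Hodd] := B_basis_1 Hb.
subst m => i j; have [s [Hs ->]] := HM i j.
move/Beq_par: Hs; rewrite BsumE unitv_e.
case: (set_I1 s) => ->.
  by rewrite big_set0 big_set0; case: (bt (a i) (a j)) => //=; lia.
rewrite !big_set1 /=; have := Hodd ord0; case: (bt (a i) (a j)) => //=; lia.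
Qed.

Definition b1 : 'I_1 -> QQ S -> int := fun _ => unitv e.

Lemma B_basis_b1 : B_basis b1.
Proof.
split.
  move=> v; case E : ((v e %% 2)%Z == 0).
    exists set0; apply: par_Beq; rewrite BsumE big_set0; move/eqP: E; lia.
  exists [set ord0]; apply: par_Beq; rewrite BsumE big_set1 /b1 /unitv eqxx.
  move/negbT/eqP: E; lia.
move=> s t HB; move/Beq_par: HB; rewrite !BsumE.
case: (set_I1 s) => ->; case: (set_I1 t) => -> //;
  rewrite ?big_set0 ?big_set1 /b1 /unitv eqxx /=; lia.
Qed.

Lemma MAB_b1 nn (a : 'I_nn -> G) :
  is_MAB a b1 (\matrix_(i < nn, j < nn) nat_of_bool (bt (a i) (a j))).
Proof.
move=> i j; rewrite mxE; case E: (bt (a i) (a j)).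
  exists [set ord0]; split; last by rewrite big_set1.
  by apply: par_Beq; rewrite BsumE big_set1 unitv_e E /b1 /unitv eqxx.
exists set0; split; last by rewrite big_set0.
by apply: par_Beq; rewrite BsumE big_set0 unitv_e E.
Qed.

Lemma final_gen (T : nat -> nat -> nat -> bool) (Mat : 'M[nat]_n) :
  Mat = \matrix_(i < n, j < n) nat_of_bool (T n i j) ->
  (exists a : 'I_n -> G, S_basis a /\ forall i j, bt (a i) (a j) = T n i j) ->
  (forall a : 'I_n -> G, S_basis a -> forall i j : 'I_n,
     (forall i' j' : 'I_n, ((i' < i)%N \/ (i' = i /\ (j' < j)%N)) -> bt (a i') (a j') = T n i' j') ->
     T n i j -> bt (a i) (a j)) ->
  normal_matrix S Mat.
Proof.
move=> EM [a [Ha Hg]] Hmin; split.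
  exists a, 1%N, b1; split => //; first exact: B_basis_b1.
  have -> : Mat = \matrix_(i < n, j < n) nat_of_bool (bt (a i) (a j)).
    by rewrite EM; apply/matrixP => i j; rewrite !mxE Hg.
  exact: MAB_b1.
move=> Y [a' [m [b [Ha' Hb HM]]]].
have -> : Y = \matrix_(i < n, j < n) nat_of_bool (bt (a' i) (a' j)).
  by apply/matrixP => i j; rewrite mxE (MAB_val Hb HM).
rewrite EM; apply: lex_first => i j Hea Ht; exact: Hmin.
Qed.

Lemma main_i : w = 0 -> ~~ odd n -> normal_matrix S (Mat_i n).
Proof.
move=> w0 Hev; apply: (final_gen (T := Ti)).
- by apply/matrixP => i j; rewrite !mxE.
- have [a [Ha Hg]] := ex_i w0 Hev; exists a; split => //; split => // H; by case: H.
- by move=> a [Ha _]; apply: min_i.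
Qed.

Lemma main_ii : w <> 0 -> ~~ odd n -> (3 <= n)%N -> normal_matrix S (Mat_ii n).
Proof.
move=> w0 Hev Hn3; apply: (final_gen (T := Tii)).
- by apply/matrixP => i j; rewrite !mxE.
- have [a [[Ha Ha0] Hg]] := ex_ii w0 Hev (ltnW Hn3); exists a; split => //.
- by move=> a [Ha Ha0]; apply: min_ii => //; apply: Ha0.
Qed.

Lemma main_iii : odd n -> normal_matrix S (Mat_iii n).
Proof.
move=> Hodd; apply: (final_gen (T := Tiii)).
- by apply/matrixP => i j; rewrite !mxE.
- have [a [[Ha Ha0] Hg]] := ex_iii Hodd; exists a; split => //.
- move=> a [Ha Ha0]; apply: min_iii => //; apply: Ha0.
  by case: (ww_iii Hodd).
Qed.
End Basics.

Theorem proposition5 (S : qstruct) (n : nat) :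
  is_qstruct S -> local_type S -> qs_order S n ->
  [/\ (~~ odd n -> qm1 S = 0%R -> normal_matrix S (Mat_i n)),
      (~~ odd n -> qm1 S <> 0%R -> normal_matrix S (Mat_ii n))
    & (odd n -> normal_matrix S (Mat_iii n))].
Proof.
move=> HS [Hnd [n' [[a' Ha'] Hn']] HQ2] [a0 Ha0].
have HG := cardG Ha0.
have HG' := cardG Ha'.
have Enn : n = n'.
  by apply/eqP; rewrite -(@eqn_exp2l 2) // -HG -HG'.
have [e [He Hall]] := two_elems (qz S) HQ2.
split.
- by move=> Hev w0; apply: (main_i HS HQ2 Hnd HG He Hall).
- move=> Hev w0; apply: (main_ii HS HQ2 Hnd HG He Hall) => //; by rewrite Enn.
- by move=> Hodd; apply: (main_iii HS HQ2 Hnd HG He Hall).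
Qed.
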